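(* Let $G$ be one of the groups $\mathrm{GU}_{2n}(q)$, $\mathrm{GU}_{2n+1}(q)$, $\mathrm{SO}_{2n+1}(q)$, $\mathrm{Sp}_{2n}(q)$ with $n\ge1$, viewed as a finite group with split $BN$-pair as described in the context. Let $L$ and $M$ be pure Levi subgroups of $G$ and let $x\in N$. Then $xLx^{-1}\cap M$ is a pure Levi subgroup of $G$.
   Context: Let $q$ be a power of a prime $p$. For $n\ge1$ the groups $G=\mathrm{GU}_{2n}(q)$, $\mathrm{GU}_{2n+1}(q)$, $\mathrm{SO}_{2n+1}(q)$, $\mathrm{Sp}_{2n}(q)$ have a natural split $BN$-pair of characteristic $p$ whose Weyl group $W=N/(B\cap N)$ is of type $B_n$, with simple reflections $S=\{s_1,\dots,s_n\}$ numbered so that $s_1,s_2$ are joined by the double edge of the Coxeter diagram and $s_i,s_{i+1}$ by a simple edge for $i\ge2$. For $I\subseteq S$ let $L_I$ denote the corresponding standard Levi subgroup. A subset $I\subseteq S$ is left connected if $I=\{s_1,\dots,s_r\}$ for some $0\le r\le n$. A Levi subgroup $L$ of $G$ is called pure if it is conjugate under $N$ to a standard Levi subgroup $L_I$ with $I$ left connected. *)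

(* Defs.v *)
From mathcomp Require Import all_boot all_order all_algebra.
Set Implicit Arguments. Unset Strict Implicit. Unset Printing Implicit Defensive.
Import GRing.Theory.
Local Open Scope ring_scope.

Inductive cgtype := GU_even | GU_odd | SO_odd | Sp_even.

Definition cg_is_unitary (t : cgtype) : bool :=
  match t with GU_even | GU_odd => true | _ => false end.

Definition dimN (t : cgtype) (n : nat) : nat :=
  match t with GU_even | Sp_even => n.*2 | _ => (n.*2).+1 end.

Section ClassicalGroups.
(* F is the field of definition: F_q for SO/Sp, F_{q^2} for GU. *)
Variables (t : cgtype) (q n : nat) (F : finFieldType).
Local Notation N := (dimN t n).
Local Notation mx := 'M[F]_N.

(* Coordinates 0..N-1; coordinate k is paired with N-1-k (hyperbolic pairs),
   the middle coordinate n is anisotropic when N is odd. *)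

Definition form_sp : mx :=
  \matrix_(i, j) (if (i + j == N.-1)%N then (if (i < n)%N then 1 else -1) else 0).

Definition form_herm : mx :=
  \matrix_(i, j) (if (i + j == N.-1)%N then 1 else 0).

Definition frob_mx (A : mx) : mx := map_mx (fun a => a ^+ q) A.

Definition quad (v : 'cV[F]_N) : F :=
  \sum_(k < N) (if (k < n)%N then v k 0 * v (rev_ord k) 0
                else if (k == n :> nat) then v k 0 ^+ 2 else 0).

Definition classical_group : {set mx} :=
  match t with
  | GU_even | GU_odd => [set A : mx | (frob_mx A)^T *m form_herm *m A == form_herm]
  | SO_odd => [set A : mx | [forall v : 'cV[F]_N, quad (A *m v) == quad v]
                            && (\det A == 1)]
  | Sp_even => [set A : mx | A^T *m form_sp *m A == form_sp]
  end.

Definition bn_B : {set mx} :=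
  [set A in classical_group | [forall i : 'I_N, forall j : 'I_N, (j < i)%N ==> (A i j == 0)]].

Definition bn_N : {set mx} :=
  [set A in classical_group | [forall i : 'I_N, #|[set j : 'I_N | A i j != 0]| == 1%N]].

(* Simple reflections s_1, ..., s_n are indexed by i : 'I_n (i <-> s_{i+1}).
   s_1 (double edge end) acts on the central coordinates n-1 .. N-n;
   s_{i+1} (i >= 1) swaps coordinates n-1-i, n-i (and their mirrors).
   joined I j k: coordinates j, k lie in a common block of the Levi L_I. *)
Definition joined (I : {set 'I_n}) : rel 'I_N := fun j k =>
  [exists i in I,
    if (i == 0 :> nat) then
      ((n.-1 <= j <= N - n) && (n.-1 <= k <= N - n))%N
    else
      let a := (n.-1 - i)%N in let b := (n - i)%N in
      [|| (j == a :> nat) && (k == b :> nat),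
          (j == b :> nat) && (k == a :> nat),
          (j == (N.-1 - a)%N :> nat) && (k == (N.-1 - b)%N :> nat)
        | (j == (N.-1 - b)%N :> nat) && (k == (N.-1 - a)%N :> nat)]].

Definition std_levi (I : {set 'I_n}) : {set mx} :=
  [set A in classical_group |
     [forall j : 'I_N, forall k : 'I_N, (A j k != 0) ==> connect (joined I) j k]].

Definition left_connected (r : nat) : {set 'I_n} := [set i : 'I_n | (i < r)%N].

Definition conjm (x : mx) (S : {set mx}) : {set mx} :=
  [set x *m A *m invmx x | A in S].

Definition pure_levi (L : {set mx}) : Prop :=
  exists2 x, x \in bn_N &
  exists2 r, (r <= n)%N & L = conjm x (std_levi (left_connected r)).

End ClassicalGroups.

(* Main.v *)
Require Import Defs.
From mathcomp Require Import all_boot all_order all_algebra perm zify.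
From mathcomp Require Import fingroup pgroup finfield.
Set Implicit Arguments. Unset Strict Implicit. Unset Printing Implicit Defensive.
Import GRing.Theory.
Local Open Scope ring_scope.

Lemma sum_single1 (F : nzRingType) m (G : 'I_m -> F) k0 : (forall k, k != k0 -> G k = 0) ->
  \sum_k G k = G k0.
Proof. by move=> H; rewrite (bigD1 k0) //= big1 ?addr0. Qed.

Section Mono.
Variables (F : finFieldType) (m : nat).
Implicit Types (x A B : 'M[F]_m) (C : {set 'I_m}).

Definition mono x := [forall i : 'I_m, #|[set j : 'I_m | x i j != 0]| == 1%N].
Definition mf x (i : 'I_m) : 'I_m := odflt i [pick j | x i j != 0].

Lemma mfP x i j : mono x -> (x i j != 0) = (j == mf x i).
Proof.
move=> /forallP/(_ i)/cards1P [j0 Hj0].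
have H k : (x i k != 0) = (k == j0).
  have := congr1 (fun S : {set 'I_m} => k \in S) Hj0; by rewrite !inE.
rewrite /mf; case: pickP => [k Hk|]/=; last by move/(_ j0); rewrite H eqxx.
by rewrite H; move: Hk; rewrite H => /eqP->.
Qed.

Lemma mf_nz x i : mono x -> x i (mf x i) != 0.
Proof. by move=> mx; rewrite mfP. Qed.

Lemma mf_surj x : mono x -> x \in unitmx -> forall j, exists i, mf x i = j.
Proof.
move=> mx ux j; case: (pickP (fun i => mf x i == j)) => [i /eqP|H]; first by exists i.
exfalso.
have := mulVmx ux; move/matrixP/(_ j j); rewrite !mxE eqxx /=.
rewrite big1 => [|k _]; first by move/eqP; rewrite eq_sym oner_eq0.
have : x k j == 0 by apply/negPn; rewrite mfP // eq_sym H.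
by move/eqP->; rewrite mulr0.
Qed.

Lemma mf_inj x : mono x -> x \in unitmx -> injective (mf x).
Proof.
move=> mx ux.
pose g j := odflt j [pick i | mf x i == j].
have gK : cancel g (mf x).
  move=> j; rewrite /g; case: pickP => [i /eqP //|H] /=.
  by have [i Hi] := mf_surj mx ux j; move: (H i); rewrite Hi eqxx.
have [g' gg' g'g] := injF_bij (can_inj gK).
have E i : mf x i = g' i by rewrite -{1}(g'g i) gK.
by move=> i1 i2; rewrite !E => /(can_inj g'g).
Qed.

Lemma sum_single (G : 'I_m -> F) k0 : (forall k, k != k0 -> G k = 0) ->
  \sum_k G k = G k0.
Proof. by move=> H; rewrite (bigD1 k0) //= big1 ?addr0. Qed.

Lemma conj_rel x A B i l : mono x -> x \in unitmx -> B *m x = x *m A ->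
  (B i l != 0) = (A (mf x i) (mf x l) != 0).
Proof.
move=> mx ux /matrixP/(_ i (mf x l)); rewrite !mxE.
rewrite (sum_single (k0 := l)) => [|k kl]; last first.
  apply/eqP; rewrite mulf_eq0; apply/orP; right; apply/negPn.
  by rewrite mfP // (inj_eq (mf_inj mx ux)) eq_sym.
rewrite (sum_single (k0 := mf x i)) => [|k ki]; last first.
  by apply/eqP; rewrite mulf_eq0; apply/orP; left; apply/negPn; rewrite mfP // eq_sym.
move=> E.
have h1 := mf_nz i mx; have h2 := mf_nz l mx.
have : (B i l * x l (mf x l) != 0) = (x i (mf x i) * A (mf x i) (mf x l) != 0) by rewrite E.
by rewrite !mulf_eq0 (negbTE h1) (negbTE h2) /= !orbF.
Qed.

Definition Lv (G : {set 'M[F]_m}) C := [set A in G | [forall j, forall k,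
  (A j k != 0) ==> ((j == k) || ((j \in C) && (k \in C)))]].
Definition pre x C := [set i | mf x i \in C].

Lemma conjm_Lv (G : {set 'M[F]_m}) x C : mono x -> x \in unitmx ->
  (forall A, A \in G -> x *m A *m invmx x \in G) ->
  (forall A, A \in G -> invmx x *m A *m x \in G) ->
  [set x *m A *m invmx x | A in Lv G C] = Lv G (pre x C).
Proof.
move=> mx ux c1 c2; apply/setP => B; apply/imsetP/idP.
  case=> A; rewrite inE => /andP [AG /forallP HA] ->.
  rewrite inE c1 //=; apply/forallP => i; apply/forallP => l; apply/implyP.
  rewrite (conj_rel (A:=A) _ _ mx ux); last by rewrite mulmxKV.
  move/(implyP (forallP (HA (mf x i)) (mf x l))).
  by rewrite (inj_eq (mf_inj mx ux)) !inE.
rewrite inE => /andP [BG /forallP HB].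
exists (invmx x *m B *m x); last by rewrite !mulmxA mulmxV // mul1mx mulmxK.
rewrite inE c2 //=; apply/forallP => j; apply/forallP => k; apply/implyP.
have [i <-] := mf_surj mx ux j; have [l <-] := mf_surj mx ux k.
rewrite -(conj_rel (B:=B) _ _ mx ux); last by rewrite !mulmxA mulmxV // mul1mx.
move/(implyP (forallP (HB i) l)).
by rewrite (inj_eq (mf_inj mx ux)) !inE.
Qed.

Lemma Lv_I (G : {set 'M[F]_m}) C D : Lv G C :&: Lv G D = Lv G (C :&: D).
Proof.
apply/setP => A; rewrite !inE.
case: (A \in G) => //=; apply/andP/forallP.
  case=> /forallP H1 /forallP H2 j; apply/forallP => k; apply/implyP => nz.
  have := implyP (forallP (H1 j) k) nz; have := implyP (forallP (H2 j) k) nz.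
  rewrite !inE; by case: (j == k); case: (j \in C); case: (k \in C); case: (j \in D); case: (k \in D).
move=> H; split; apply/forallP => j; apply/forallP => k; apply/implyP => nz;
  have := implyP (forallP (H j) k) nz; rewrite !inE;
  by case: (j == k); case: (j \in C); case: (k \in C); case: (j \in D); case: (k \in D).
Qed.

End Mono.

Definition inCg (N n r : nat) (j : nat) : bool :=
  ((n - r <= j) && (j <= N.-1 - (n - r)))%N.

Definition Adm N (C : {set 'I_N}) :=
  [forall j, (rev_ord j \in C) == (j \in C)] && [forall j, (rev_ord j == j) ==> (j \in C)].

Lemma perm_construct N n (C : {set 'I_N}) : (n.*2 <= N <= (n.*2).+1)%N -> Adm C ->
  exists (s : {perm 'I_N}) r, [/\ (r <= n)%N, (forall j, s (rev_ord j) = rev_ord (s j)),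
     (forall j, (s j < n)%N = (j < n)%N) & (forall j, inCg N n r (s j) = (j \in C))].
Proof.
move=> hN /andP [/forallP Csym /forallP Cfix].
pose cn (k : nat) := [exists j : 'I_N, (j == k :> nat) && (j \in C)].
pose l1 := filter (predC cn) (iota 0 n); pose l2 := filter cn (iota 0 n).
pose l := l1 ++ l2.
pose rho k := index k l.
pose r := count cn (iota 0 n).
have F1 k : (k < n)%N -> k \in l.
  by move=> kn; rewrite mem_cat !mem_filter mem_iota /= kn; case: (cn k).
have F2 : size l = n.
  by rewrite size_cat !size_filter addnC count_predC size_iota.
have Fs1 : size l1 = (n - r)%N.
  have := count_predC cn (iota 0 n); rewrite size_iota /l1 size_filter -/r; lia.
have rn : (r <= n)%N by rewrite /r -[X in (_ <= X)%N](size_iota 0 n) count_size.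
have F3 k : (k < n)%N -> (rho k < n)%N by move=> kn; rewrite -F2 index_mem F1.
have F3t k : (rho k < n)%N || (n <= k)%N.
  by case: (ltnP k n) => h; [rewrite F3 | rewrite orbT].
have F4 k k' : (k < n)%N -> (k' < n)%N -> rho k = rho k' -> k = k'.
  move=> kn kn' E; rewrite -(nth_index 0 (F1 _ kn)) -(nth_index 0 (F1 _ kn')).
  by rewrite -/(rho k) -/(rho k') E.
have F5 k : (k < n)%N -> (n - r <= rho k)%N = cn k.
  move=> kn; rewrite /rho /l index_cat Fs1.
  have : k \in l1 = ~~ cn k by rewrite mem_filter mem_iota /= kn andbT.
  case: ifP => [kl1 /esym/negbTE -> |kl1 /esym/negbFE ->].
    by have := index_mem k l1; rewrite kl1 Fs1 => H; lia.
  by lia.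
pose sn (j : nat) := if (j < n)%N then rho j else if (j < N - n)%N then j
   else (N.-1 - rho (N.-1 - j))%N.
have snlt (j : 'I_N) : (sn j < N)%N.
  have := ltn_ord j; rewrite /sn; case: ifP => h1.
    by have := F3 _ h1; lia.
  case: ifP => h2 //; have := F3 (N.-1 - j)%N; lia.
pose s0 (j : 'I_N) := Ordinal (snlt j).
have s0inj : injective s0.
  move=> j j' /(congr1 val) /= E; apply: ord_inj; move: E; rewrite /sn.
  have := ltn_ord j; have := ltn_ord j'.
  have := F3t j; have := F3t j'; have := F3t (N.-1 - j)%N; have := F3t (N.-1 - j')%N.
  have := F4 j j'; have := F4 (N.-1 - j)%N (N.-1 - j')%N.
  repeat (case: ifP => ?); lia.
exists (perm s0inj), r; split => //.
- move=> j; apply: ord_inj; rewrite !permE /= /sn.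
  have := ltn_ord j; have := F3t j; have := F3t (N.-1 - j)%N.
  have -> : (N.-1 - (N - j.+1) = j)%N by have := ltn_ord j; lia.
  rewrite (_ : (N - j.+1 = N.-1 - j)%N); last by lia.
  repeat (case: ifP => ?); lia.
- move=> j; rewrite permE /= /sn; case: ifP => h1.
    by have := F3 _ h1; lia.
  case: ifP => h2; first by lia.
  have := F3 (N.-1 - j)%N; lia.
- move=> j; rewrite permE /= /sn /inCg.
  have := ltn_ord j; case: ifP => h1.
    move=> _; have := F5 _ h1; have := F3 _ h1.
    have -> : cn j = (j \in C).
      apply/existsP/idP => [[j' /andP [/eqP /val_inj -> //]]|jC]; by exists j; rewrite eqxx.
    by case: (j \in C); lia.
  case: ifP => h2.
    move=> jN; have fx : rev_ord j = j by apply: val_inj => /=; lia.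
    have := implyP (Cfix j); rewrite fx eqxx => -> //; lia.
  move=> jN.
  have mn : (N.-1 - j < n)%N by lia.
  have := F5 _ mn; have := F3 _ mn.
  have -> : cn (N.-1 - j)%N = (j \in C).
    rewrite -(eqP (Csym j)).
    apply/existsP/idP => [[j' /andP [/eqP E jC]]|jC].
      by rewrite (_ : rev_ord j = j') //; apply: val_inj => /=; lia.
    by exists (rev_ord j); rewrite jC andbT /=; apply/eqP; lia.
  by case: (j \in C); lia.
Qed.

Lemma dimN_bnd t n : (n.*2 <= dimN t n <= (n.*2).+1)%N.
Proof. by case: t => /=; lia. Qed.

Definition inC t n r (j : nat) : bool := inCg (dimN t n) n r j.

Lemma joined_sym t n I : symmetric (@joined t n I).
Proof.
move=> j k; rewrite /joined; apply/existsP/existsP => -[i /andP [iI H]]; exists i;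
  rewrite iI /=; case: ifP H => _;
  [by rewrite andbC | by case/or4P => /andP [-> ->]; rewrite ?orbT ?andbT
  |by rewrite andbC | by case/or4P => /andP [-> ->]; rewrite ?orbT ?andbT].
Qed.

Lemma connect_std t n r (j k : 'I_(dimN t n)) : (0 < n)%N -> (r <= n)%N ->
  connect (@joined t n (left_connected n r)) j k =
  (j == k) || (inC t n r j && inC t n r k).
Proof.
move=> n0 rn; have hN := dimN_bnd t n.
set e := @joined t n (left_connected n r).
have Rstep a b : e a b -> inC t n r a && inC t n r b.
  case/existsP => i /andP []; rewrite inE => ir; rewrite /inC /inCg .
  case: ifP => [/eqP i0|i0].
    by move=> /andP [/andP [h1 h2] /andP [h3 h4]]; apply/andP; split; apply/andP; split; lia.
  have ilt := ltn_ord i.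
  by case/or4P => /andP [/eqP h1 /eqP h2]; apply/andP; split; apply/andP; split; lia.
apply/idP/idP.
  case/connectP => p; elim: p j => [|a p IH] j /=; first by move=> _ ->; rewrite eqxx.
  case/andP => ja pa kl; have := IH a pa kl.
  have := Rstep _ _ ja.
  move/andP=> [h1 h2]; case/orP => [/eqP <-|/andP [_ h4]]; by rewrite h1 ?h2 ?h4 orbT.
have symC := sym_connect_sym (@joined_sym t n (left_connected n r)).
case/orP => [/eqP -> |/andP [cj ck]]; first exact: connect0.
case: (posnP r) => [r0|r0].
  have -> : j = k by apply: val_inj; move: cj ck; rewrite /inC /inCg r0 /= ; lia.
  exact: connect0.
have cN : (n.-1 < (dimN t n))%N by lia.
pose c := Ordinal cN.
suff H (a : 'I_(dimN t n)) : inC t n r a -> connect e a c.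
  by apply: connect_trans (H _ cj) _; rewrite symC; apply: H.
move=> ca.
have mid (b : 'I_(dimN t n)) : (n.-1 <= b <= (dimN t n) - n)%N -> connect e b c.
  move=> hb; apply: connect1; apply/existsP; exists (Ordinal n0); rewrite inE r0 /=.
  by rewrite hb /=; apply/andP; split; lia.
have low : forall m (b : 'I_(dimN t n)), (b + m = n.-1)%N -> inC t n r b -> connect e b c.
  elim=> [|m IH] b hb cb; first by apply: mid; lia.
  have b1 : (b.+1 < (dimN t n))%N by lia.
  apply: connect_trans (IH (Ordinal b1) _ _); [|by rewrite /=; lia|by move: cb; rewrite /inC /inCg /=; lia].
  have im : (m.+1 < n)%N by lia.
  apply: connect1; apply/existsP; exists (Ordinal im); rewrite inE /=.
  apply/andP; split; first by move: cb; rewrite /inC /inCg; lia.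
  by apply/orP; left; apply/andP; split; rewrite /=; lia.
have high : forall m (b : 'I_(dimN t n)), (b : nat) = ((dimN t n) - n + m)%N -> inC t n r b -> connect e b c.
  elim=> [|m IH] b hb cb; first by apply: mid; lia.
  have bN := ltn_ord b; have b1 : (b.-1 < (dimN t n))%N by lia.
  apply: connect_trans (IH (Ordinal b1) _ _); [|by rewrite /=; lia|by move: cb; rewrite /inC /inCg /=; lia].
  have im : (m.+1 < n)%N by move: cb; rewrite /inC /inCg; lia.
  apply: connect1; apply/existsP; exists (Ordinal im); rewrite inE /=.
  apply/andP; split; first by move: cb; rewrite /inC /inCg; lia.
  by apply/orP; right; apply/orP; right; apply/orP; left; apply/andP; split; rewrite /=; lia.
case: (ltnP a n.-1) => ha.
  by apply: (low (n.-1 - a)%N a _ ca); lia.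
case: (leqP a ((dimN t n) - n)) => hb; first by apply: mid; lia.
by apply: (high (a - ((dimN t n) - n))%N a _ ca); lia.
Qed.

Lemma sp_sq n (F : finFieldType) :
  form_sp Sp_even n F *m form_sp Sp_even n F = - 1%:M.
Proof.
apply/matrixP => i k; rewrite !mxE (sum_single1 (k0 := rev_ord i)).
  rewrite !mxE /=.
  have hi : (i < n.*2)%N := ltn_ord i; have hk : (k < n.*2)%N := ltn_ord k.
  have -> : (i + (n.*2 - i.+1) == (n.*2).-1)%N by apply/eqP; lia.
  case: (eqVneq i k) => [<-|ik].
    have -> : (n.*2 - i.+1 + i == (n.*2).-1)%N by apply/eqP; lia.
    case: ifP => h1; case: ifP => h2; rewrite ?mulr1n; try lia; by rewrite ?mulr1 ?mul1r ?mulN1r ?mulrN1.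
  have -> : (n.*2 - i.+1 + k == (n.*2).-1)%N = false.
    by apply/negbTE/eqP => E; move/eqP: ik; apply; apply: ord_inj; lia.
  by rewrite mulr0 oppr0.
move=> j ji; rewrite !mxE.
have -> : (i + j == (dimN Sp_even n).-1)%N = false.
  apply/negbTE/eqP => E; move/eqP: ji; apply; apply: ord_inj => /=; have := ltn_ord i; move: E => /=; lia.
by rewrite mul0r.
Qed.

Lemma form_unit m (F : fieldType) (J A X : 'M[F]_m) (c : F) : c != 0 ->
  J *m J = c%:M -> X^T *m J *m A = J -> A \in unitmx.
Proof.
move=> c0 JJ E.
have : (c^-1 *: (J *m X^T *m J)) *m A = 1%:M.
  rewrite -scalemxAl -!mulmxA (mulmxA X^T) E JJ scale_scalar_mx mulVf //.
by case/mulmx1_unit.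
Qed.

Lemma form_mul m (F : fieldType) (J A B XA XB : 'M[F]_m) :
  XA^T *m J *m A = J -> XB^T *m J *m B = J -> (XA *m XB)^T *m J *m (A *m B) = J.
Proof.
move=> EA EB; have : XB^T *m (XA^T *m J *m A) *m B = J by rewrite EA.
by rewrite trmx_mul !mulmxA.
Qed.

Lemma form_inv m (F : fieldType) (J A X : 'M[F]_m) :
  A \in unitmx -> X \in unitmx -> X^T *m J *m A = J -> (invmx X)^T *m J *m invmx A = J.
Proof.
move=> uA uX E; rewrite -{1}E !mulmxA -trmx_mul mulmxV // trmx1 mul1mx.
by rewrite -mulmxA mulmxV // mulmx1.
Qed.

Lemma herm_sq t n (F : finFieldType) :
  form_herm t n F *m form_herm t n F = 1%:M.
Proof.
apply/matrixP => i k; rewrite !mxE (sum_single1 (k0 := rev_ord i)).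
  rewrite !mxE /=.
  have hi := ltn_ord i; have hk := ltn_ord k.
  have -> : (i + (dimN t n - i.+1) == (dimN t n).-1)%N by apply/eqP; lia.
  case: (eqVneq i k) => [<-|ik].
    have -> : (dimN t n - i.+1 + i == (dimN t n).-1)%N by apply/eqP; lia.
    by rewrite mulr1.
  have -> : (dimN t n - i.+1 + k == (dimN t n).-1)%N = false.
    by apply/negbTE/eqP => E; move/eqP: ik; apply; apply: ord_inj; lia.
  by rewrite mulr0.
move=> j ji; rewrite !mxE.
have -> : (i + j == (dimN t n).-1)%N = false.
  apply/negbTE/eqP => E; move/eqP: ji; apply; apply: ord_inj => /=; have := ltn_ord i; move: E => /=; lia.
by rewrite mul0r.
Qed.

Lemma frob_addq (F : finFieldType) (q : nat) : #|F| = (q ^ 2)%N ->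
  forall a b : F, (a + b) ^+ q = a ^+ q + b ^+ q.
Proof.
move=> hF a b; apply: exprDn_pchar.
have [p pp pc] := finPcharP F.
have pg := pprimeChar_pgroup pc.
have : p.-nat #|F|.
  move: pg; rewrite /pgroup cardsT. done.
rewrite hF => /pnat_dvd H.
have Hq : p.-nat q by apply: H; rewrite expnS dvdn_mulr.
by rewrite (eq_pnat _ (pcharf_eq pc)).
Qed.

Lemma q_gt0 (F : finFieldType) (q : nat) : #|F| = (q ^ 2)%N -> (0 < q)%N.
Proof. move=> hF; have := finNzRing_gt1 F; rewrite hF; by case: (q). Qed.

Section Frob.
Variables (F : finFieldType) (q m : nat).
Hypothesis hF : #|F| = (q ^ 2)%N.
Let fr (A : 'M[F]_m) := map_mx (fun a => a ^+ q) A.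

Lemma frob_mulmx A B : fr (A *m B) = fr A *m fr B.
Proof.
apply/matrixP => i j; rewrite !mxE.
rewrite (big_morph (fun a : F => a ^+ q) (frob_addq hF) (_ : 0 ^+ q = 0)).
  by apply: eq_bigr => k _; rewrite exprMn !mxE.
by rewrite expr0n; have := q_gt0 hF; case: (q).
Qed.

Lemma frob1mx : fr 1%:M = 1%:M.
Proof.
apply/matrixP => i j; rewrite !mxE; case: (i == j); rewrite /= ?expr1n //.
by rewrite expr0n; have := q_gt0 hF; case: (q).
Qed.

Lemma frob_inv A : A \in unitmx -> fr (invmx A) = invmx (fr A) /\ fr A \in unitmx.
Proof.
move=> uA; have E : fr A *m fr (invmx A) = 1%:M by rewrite -frob_mulmx mulmxV // frob1mx.
have [u1 u2] := mulmx1_unit E; split => //.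
by rewrite -[LHS]mul1mx -(mulVmx u1) -mulmxA E mulmx1.
Qed.
End Frob.

Lemma G_props t q n (F : finFieldType) :
  #|F| = (if cg_is_unitary t then q ^ 2 else q)%N ->
  [/\ (forall A B, A \in classical_group t q n F -> B \in classical_group t q n F ->
         A *m B \in classical_group t q n F),
      (forall A, A \in classical_group t q n F -> A \in unitmx) &
      (forall A, A \in classical_group t q n F -> invmx A \in classical_group t q n F)].
Proof.
case: t => /= hF.
- have u A : A \in classical_group GU_even q n F -> A \in unitmx.
    by rewrite inE => /eqP E; apply: (form_unit (oner_neq0 F) (herm_sq _ _ _) E).
  split => //.
    move=> A B; rewrite !inE => /eqP EA /eqP EB; apply/eqP.
    by rewrite /frob_mx frob_mulmx //; apply: form_mul.
  move=> A AG; have uA := u A AG; move: AG; rewrite !inE => /eqP E; apply/eqP.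
  have [e1 e2] := frob_inv hF uA.
  by rewrite /frob_mx e1; apply: form_inv.
- have u A : A \in classical_group GU_odd q n F -> A \in unitmx.
    by rewrite inE => /eqP E; apply: (form_unit (oner_neq0 F) (herm_sq _ _ _) E).
  split => //.
    move=> A B; rewrite !inE => /eqP EA /eqP EB; apply/eqP.
    by rewrite /frob_mx frob_mulmx //; apply: form_mul.
  move=> A AG; have uA := u A AG; move: AG; rewrite !inE => /eqP E; apply/eqP.
  have [e1 e2] := frob_inv hF uA.
  by rewrite /frob_mx e1; apply: form_inv.
- have u A : A \in classical_group SO_odd q n F -> A \in unitmx.
    by rewrite inE => /andP [_ /eqP d]; rewrite unitmxE d unitr1.
  split => //.
    move=> A B; rewrite !inE => /andP [/forallP qA /eqP dA] /andP [/forallP qB /eqP dB].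
    rewrite det_mulmx dA dB mulr1 eqxx andbT; apply/forallP => v.
    by rewrite -mulmxA (eqP (qA _)) (eqP (qB _)).
  move=> A AG; have uA := u A AG; move: AG; rewrite !inE => /andP [/forallP qA /eqP dA].
  rewrite det_inv dA invr1 eqxx andbT; apply/forallP => v.
  by rewrite -(eqP (qA _)) mulmxA mulmxV // mul1mx.
- have u A : A \in classical_group Sp_even q n F -> A \in unitmx.
    rewrite inE => /eqP E; apply: (form_unit (c := -1) _ _ E).
      by rewrite oppr_eq0 oner_neq0.
    by rewrite sp_sq; apply/matrixP => i j; rewrite !mxE; case: (i == j); rewrite /= ?oppr0 ?mulr1n.
  split => //.
    by move=> A B; rewrite !inE => /eqP EA /eqP EB; apply/eqP; apply: form_mul.
  move=> A AG; have uA := u A AG; move: AG; rewrite !inE => /eqP E; apply/eqP.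
  by apply: form_inv.
Qed.

Lemma quad_e n (F : finFieldType) (a : 'I_(n.*2.+1)) (c : F) :
  quad (t := SO_odd) (c *: delta_mx a 0) = if (a == n :> nat) then c ^+ 2 else 0.
Proof.
rewrite /quad /= (sum_single1 (k0 := a)) => [|k ka]; last first.
  by rewrite !mxE (negbTE ka) /= mulr0 mul0r; case: ifP => _ //; case: ifP => _ //; rewrite expr0n.
rewrite !mxE eqxx /= mulr1.
have ha := ltn_ord a; 
case: ifP => h1.
  have -> : (rev_ord a == a) = false by apply/negbTE/eqP => /(congr1 (@nat_of_ord _)) /=; lia.
  rewrite (ltn_eqF h1).
  by rewrite /= !mulr0.
by case: ifP.
Qed.

Lemma quad_e2 n (F : finFieldType) (a b : 'I_(n.*2.+1)) (c d : F) :
  a != b -> (a != n :> nat) -> (b != n :> nat) ->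
  quad (t := SO_odd) (c *: delta_mx a 0 + d *: delta_mx b 0) =
    if (a + b == n.*2)%N then c * d else 0.
Proof.
move=> ab an bn.
have ha := ltn_ord a; have hb := ltn_ord b; 
rewrite /quad /= (bigD1 a) //= (bigD1 b) 1?eq_sym //= big1 => [|k /andP [ka kb]]; last first.
  by rewrite !mxE (negbTE ka) (negbTE kb) /= !mulr0 addr0 mul0r; case: ifP => _ //; case: ifP => _ //; rewrite expr0n.
rewrite addr0 !mxE !eqxx (negbTE ab) (eq_sym b a) (negbTE ab) /= !mulr1 !mulr0 !addr0 ?add0r.
have an' : (n == a :> nat) = false by rewrite eq_sym (negbTE an).
have bn' : (n == b :> nat) = false by rewrite eq_sym (negbTE bn).
rewrite ?an' ?bn' ?(negbTE an) ?(negbTE bn).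
have rv (u v : 'I_(n.*2.+1)) : (rev_ord u == v) = (u + v == n.*2)%N.
  have hu := ltn_ord u.
  apply/eqP/eqP => [<-|E]; first by rewrite /=; lia.
  by apply: ord_inj => /=; lia.
rewrite !rv [(b + a)%N]addnC.
have -> : (a + a == n.*2)%N = false by apply/negbTE/eqP; move/eqP: an; lia.
have -> : (b + b == n.*2)%N = false by apply/negbTE/eqP; move/eqP: bn; lia.
rewrite /= !mulr0 ?addr0 ?add0r.
case: ifP => h1; case: ifP => h2; case: ifP => h3; rewrite ?mulr1 ?mulr0 ?addr0 ?add0r ?(mulrC d) //; lia.
Qed.

Lemma form_pair m (F : finFieldType) (J X Y : 'M[F]_m) : mono Y -> Y \in unitmx ->
  (forall i j, (X i j != 0) = (Y i j != 0)) -> X^T *m J *m Y = J ->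
  forall i l, (J i l != 0) = (J (mf Y i) (mf Y l) != 0).
Proof.
move=> mY uY hXY E i l.
have := congr1 (fun M : 'M[F]_m => M (mf Y i) (mf Y l)) E; rewrite /= -mulmxA mxE.
rewrite (sum_single1 (k0 := i)) => [|k ki]; last first.
  rewrite !mxE; apply/eqP; rewrite mulf_eq0; apply/orP; left; apply/negPn.
  by rewrite hXY mfP // (inj_eq (mf_inj mY uY)) eq_sym.
rewrite !mxE (sum_single1 (k0 := l)) => [|k kl]; last first.
  apply/eqP; rewrite mulf_eq0; apply/orP; right; apply/negPn.
  by rewrite mfP // (inj_eq (mf_inj mY uY)) eq_sym.
move=> <-.
have h1 : X i (mf Y i) != 0 by rewrite hXY mf_nz.
have h2 := mf_nz l mY.
by rewrite !mulf_eq0 (negbTE h1) (negbTE h2) /= orbF.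
Qed.

Lemma rev_ordE m (i l : 'I_m) : (l == rev_ord i) = (i + l == m.-1)%N.
Proof.
have := ltn_ord i; have := ltn_ord l => h1 h2.
apply/eqP/eqP => [->|E]; first by rewrite /=; lia.
by apply: ord_inj => /=; lia.
Qed.

Lemma pair_from_rel m (f : 'I_m -> 'I_m) (P : 'I_m -> 'I_m -> bool) :
  (forall i l, P i l = (l == rev_ord i)) ->
  (forall i l, P i l = P (f i) (f l)) -> forall i, f (rev_ord i) = rev_ord (f i).
Proof. by move=> HP H i; apply/eqP; rewrite -HP -H HP. Qed.

Lemma herm_nz t n (F : finFieldType) i l : (form_herm t n F i l != 0) = (l == rev_ord i).
Proof. by rewrite mxE rev_ordE; case: ifP; rewrite ?oner_neq0 ?eqxx. Qed.

Lemma sp_nz n (F : finFieldType) i l : (form_sp Sp_even n F i l != 0) = (l == rev_ord i).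
Proof.
rewrite mxE rev_ordE; case: ifP; rewrite ?eqxx //.
by case: ifP; rewrite ?oppr_eq0 oner_neq0.
Qed.

Lemma col_mono m (F : finFieldType) (x : 'M[F]_m) i : mono x -> x \in unitmx ->
  x *m delta_mx (mf x i) 0 = x i (mf x i) *: delta_mx i (0 : 'I_1).
Proof.
move=> mx ux; apply/matrixP => k z; rewrite (ord1 z) !mxE.
rewrite (sum_single1 (k0 := mf x i)) => [|j ji]; last by rewrite !mxE (negbTE ji) mulr0.
rewrite !mxE !eqxx /= mulr1 andbT.
case: (eqVneq k i) => [->|ki]; first by rewrite mulr1.
rewrite mulr0; apply/eqP; apply/negPn; rewrite mfP // (inj_eq (mf_inj mx ux)).
by rewrite eq_sym (negbTE ki).
Qed.

Lemma so_pair q n (F : finFieldType) (x : 'M[F]_(dimN SO_odd n)) :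
  x \in classical_group SO_odd q n F -> mono x -> x \in unitmx ->
  forall i, mf x (rev_ord i) = rev_ord (mf x i).
Proof.
rewrite inE => /andP [/forallP qx _] mx ux.
have qe v : quad (x *m v) = quad v by apply/eqP.
have F1 (i : 'I_(dimN SO_odd n)) : (i == n :> nat) = (mf x i == n :> nat).
  have := qe (delta_mx (mf x i) 0); rewrite col_mono // -[delta_mx (mf x i) 0]scale1r.
  rewrite !quad_e; have h := mf_nz i mx.
  case: ifP; case: ifP => // _ _.
    by move/eqP; rewrite expf_eq0 /= (negbTE h).
  by move/eqP; rewrite expr1n eq_sym oner_eq0.
have F2 (i l : 'I_(dimN SO_odd n)) : i != l -> (i != n :> nat) -> (l != n :> nat) ->
    (i + l == n.*2)%N = (mf x i + mf x l == n.*2)%N.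
  move=> il inn lnn.
  have := qe (delta_mx (mf x i) 0 + delta_mx (mf x l) 0).
  rewrite mulmxDr !col_mono // -[delta_mx (mf x i) 0]scale1r -[delta_mx (mf x l) 0]scale1r.
  have n1 : (mf x i != n :> nat) by rewrite -F1.
  have n2 : (mf x l != n :> nat) by rewrite -F1.
  have n3 : mf x i != mf x l by rewrite (inj_eq (mf_inj mx ux)).
  rewrite !quad_e2 //.
  have h := mulf_neq0 (mf_nz i mx) (mf_nz l mx).
  case: ifP; case: ifP => // _ _.
    by move/eqP; rewrite (negbTE h).
  by move/eqP; rewrite mulr1 eq_sym oner_eq0.
move=> i; apply/eqP; rewrite rev_ordE.
have hd : dimN SO_odd n = n.*2.+1 := erefl.
have rv : (rev_ord i : nat) = (dimN SO_odd n - i.+1)%N := erefl.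
have hi := ltn_ord i.
case: (eqVneq (i : nat) n) => [iN|iN].
  have ri : rev_ord i = i by apply: ord_inj; rewrite rv; lia.
  rewrite ri; have := F1 i; rewrite iN eqxx => /esym /eqP ->; change (n + n == n.*2)%N; apply/eqP; lia.
have rN : (rev_ord i : nat) != n by apply/eqP; rewrite rv; move/eqP: iN; lia.
have ril : i != rev_ord i by apply/eqP => /(congr1 (@nat_of_ord _)); rewrite rv; move/eqP: iN; lia.
change ((mf x i + mf x (rev_ord i))%N == n.*2); rewrite -F2 // rv; apply/eqP; lia.
Qed.

Lemma bn_pair t q n (F : finFieldType) :
  #|F| = (if cg_is_unitary t then q ^ 2 else q)%N ->
  forall x, x \in bn_N t q n F -> forall i, mf x (rev_ord i) = rev_ord (mf x i).
Proof.
move=> hF x; rewrite inE => /andP [xG mx].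
have ux : x \in unitmx by have [_ uG _] := @G_props t q n F hF; exact: uG.
move: x xG mx ux; case: t hF => /= hF x xG mx ux.
- move: xG; rewrite inE => /eqP E.
  apply: (@pair_from_rel _ _ (fun i l => form_herm GU_even n F i l != 0) (@herm_nz _ _ F)).
  apply: (form_pair mx ux _ E) => i j.
  by rewrite mxE expf_eq0 (q_gt0 hF).
- move: xG; rewrite inE => /eqP E.
  apply: (@pair_from_rel _ _ (fun i l => form_herm GU_odd n F i l != 0) (@herm_nz _ _ F)); apply: (form_pair mx ux _ E) => i j.
  by rewrite mxE expf_eq0 (q_gt0 hF).
- exact: so_pair xG mx ux.
- move: xG; rewrite inE => /eqP E.
  by apply: (@pair_from_rel _ _ (fun i l => form_sp Sp_even n F i l != 0) (@sp_nz _ F)); apply: (form_pair mx ux _ E).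
Qed.

Lemma mono_of m (F : finFieldType) (w : 'M[F]_m) (s : 'I_m -> 'I_m) :
  (forall i j, (w i j != 0) = (j == s i)) -> mono w /\ (forall i, mf w i = s i).
Proof.
move=> H; have mw : mono w.
  apply/forallP => i; apply/eqP.
  have -> : [set j | w i j != 0] = [set s i] by apply/setP => j; rewrite !inE H.
  exact: cards1.
by split => // i; apply/eqP; rewrite eq_sym -mfP // H.
Qed.

Lemma perm_conj m (F : finFieldType) (J : 'M[F]_m) (s : {perm 'I_m}) :
  (forall i j, J (s i) (s j) = J i j) ->
  (perm_mx s)^T *m J *m perm_mx s = J.
Proof.
move=> H; rewrite tr_perm_mx -row_permE.
rewrite (_ : perm_mx s = perm_mx ((s^-1)%g)^-1%g); last by rewrite invgK.
rewrite -col_permE; apply/matrixP => i j; rewrite !mxE.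
by rewrite -[in RHS](permKV s i) -[in RHS](permKV s j) H.
Qed.

Lemma perm_inv_props m n (s : {perm 'I_m}) :
  (forall j, s (rev_ord j) = rev_ord (s j)) -> (forall j, (s j < n)%N = (j < n)%N) ->
  (forall j, (s^-1)%g (rev_ord j) = rev_ord ((s^-1)%g j)) /\ (forall j, ((s^-1)%g j < n)%N = (j < n)%N).
Proof.
move=> H1 H2; split => j.
  by apply: (perm_inj (s := s)); rewrite permKV H1 permKV.
by rewrite -{2}(permKV s j) H2.
Qed.

Lemma perm_mx_nz m (F : finFieldType) (s : {perm 'I_m}) i j :
  (perm_mx s i j != 0 :> F) = (j == s i).
Proof. by rewrite !mxE (eq_sym j); case: (s i == j); rewrite ?oner_neq0 ?eqxx. Qed.

Lemma quad_scale n (F : finFieldType) (c : F) (v : 'cV[F]_(dimN SO_odd n)) :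
  quad (c *: v) = c ^+ 2 * quad v.
Proof.
rewrite /quad mulr_sumr; apply: eq_bigr => k _; rewrite !mxE.
case: ifP => _; first by rewrite mulrACA -expr2.
by case: ifP => _; rewrite ?mulr0 // exprMn.
Qed.

Lemma quad_perm n (F : finFieldType) (s : {perm 'I_(dimN SO_odd n)}) (v : 'cV[F]_(dimN SO_odd n)) :
  (forall j, s (rev_ord j) = rev_ord (s j)) -> (forall j, (s j < n)%N = (j < n)%N) ->
  quad (perm_mx s *m v) = quad v.
Proof.
move=> H1 H2; rewrite -row_permE /quad [RHS](reindex_inj (@perm_inj _ s)) /=.
apply: eq_bigr => k _; rewrite !mxE H2 H1.
have hd : dimN SO_odd n = n.*2.+1 := erefl.
have E : (s k == n :> nat) = (k == n :> nat).
  have rk (j : 'I_(dimN SO_odd n)) : (j == n :> nat) = (rev_ord j == j).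
    have rv : (rev_ord j : nat) = (dimN SO_odd n - j.+1)%N := erefl.
    have := ltn_ord j => hj.
    apply/eqP/eqP => [E|/(congr1 (@nat_of_ord _))]; last by rewrite rv; lia.
    by apply: ord_inj; rewrite rv; lia.
  by rewrite !rk -H1 (inj_eq (@perm_inj _ s)).
by rewrite E.
Qed.

Lemma sum_perm_rev m (s : {perm 'I_m}) i j :
  (forall j, s (rev_ord j) = rev_ord (s j)) ->
  (s i + s j == m.-1)%N = (i + j == m.-1)%N.
Proof. by move=> H1; rewrite -!rev_ordE -H1 (inj_eq (@perm_inj _ s)). Qed.

Lemma perm_in_bn t q n (F : finFieldType) :
  #|F| = (if cg_is_unitary t then q ^ 2 else q)%N ->
  forall s : {perm 'I_(dimN t n)},
  (forall j, s (rev_ord j) = rev_ord (s j)) -> (forall j, (s j < n)%N = (j < n)%N) ->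
  exists w, w \in bn_N t q n F /\ (forall i, mf w i = s i).
Proof.
case: t => /= hF s H1 H2.
- have [mw fw] := mono_of (@perm_mx_nz _ F s).
  exists (perm_mx s); split => //; rewrite inE; apply/andP; split; last exact: mw; rewrite inE.
  have -> : frob_mx q (perm_mx s : 'M[F]_(dimN GU_even n)) = perm_mx s.
    apply/matrixP => i j; rewrite !mxE; case: (_ == _) => /=; rewrite ?expr1n //.
    by rewrite expr0n; have := q_gt0 hF; case: (q).
  by apply/eqP; apply: perm_conj => i j; rewrite !mxE sum_perm_rev.
- have [mw fw] := mono_of (@perm_mx_nz _ F s).
  exists (perm_mx s); split => //; rewrite inE; apply/andP; split; last exact: mw; rewrite inE.
  have -> : frob_mx q (perm_mx s : 'M[F]_(dimN GU_odd n)) = perm_mx s.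
    apply/matrixP => i j; rewrite !mxE; case: (_ == _) => /=; rewrite ?expr1n //.
    by rewrite expr0n; have := q_gt0 hF; case: (q).
  by apply/eqP; apply: perm_conj => i j; rewrite !mxE sum_perm_rev.
- pose d : F := \det (perm_mx s : 'M[F]_(dimN SO_odd n)).
  have dE : d = (-1) ^+ s by rewrite /d det_perm.
  have d0 : d != 0 by rewrite dE signr_eq0.
  have [mw fw] : mono (d *: (perm_mx s : 'M[F]_(dimN SO_odd n))) /\
      (forall i, mf (d *: (perm_mx s : 'M[F]_(dimN SO_odd n))) i = s i).
    apply: mono_of => i j; rewrite mxE mulf_eq0 negb_or d0 /=.
    exact: perm_mx_nz.
  exists (d *: perm_mx s); split => //; rewrite inE; apply/andP; split; last exact: mw; rewrite inE.
  apply/andP; split.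
    apply/forallP => v; apply/eqP.
    by rewrite -scalemxAl quad_scale quad_perm // dE sqrr_sign mul1r.
  rewrite detZ -/d dE -exprSr (_ : (n.*2.+2 = 2 * n.+1)%N) ?exprM ?sqrr_sign ?expr1n //.
  lia.
- have [mw fw] := mono_of (@perm_mx_nz _ F s).
  exists (perm_mx s); split => //; rewrite inE; apply/andP; split; last exact: mw; rewrite inE.
  by apply/eqP; apply: perm_conj => i j; rewrite !mxE sum_perm_rev // H2.
Qed.

Definition Cset t n r : {set 'I_(dimN t n)} := [set j : 'I_(dimN t n) | inC t n r j].

Lemma std_Lv t q n (F : finFieldType) r : (0 < n)%N -> (r <= n)%N ->
  std_levi t q F (left_connected n r) = Lv (classical_group t q n F) (Cset t n r).
Proof.
move=> n0 rn; apply/setP => A; rewrite !inE; congr (_ && _).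
apply: eq_forallb => j; apply: eq_forallb => k; by rewrite connect_std // !inE.
Qed.

Lemma conj_bn t q n (F : finFieldType) :
  #|F| = (if cg_is_unitary t then q ^ 2 else q)%N ->
  forall x C, x \in bn_N t q n F ->
  conjm x (Lv (classical_group t q n F) C) = Lv (classical_group t q n F) (pre x C).
Proof.
move=> hF x C; rewrite inE => /andP [xG mx].
have [Gm Gu Gi] := @G_props t q n F hF.
have ux := Gu _ xG.
rewrite /conjm; apply: conjm_Lv => //.
  by move=> A AG; apply: (Gm _ _ (Gm _ _ xG AG) (Gi _ xG)).
by move=> A AG; apply: (Gm _ _ (Gm _ _ (Gi _ xG) AG) xG).
Qed.

Lemma Adm_I m (C D : {set 'I_m}) : Adm C -> Adm D -> Adm (C :&: D).
Proof.
case/andP => /forallP C1 /forallP C2 /andP [/forallP D1 /forallP D2].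
apply/andP; split; apply/forallP => j; rewrite !inE.
  by rewrite (eqP (C1 j)) (eqP (D1 j)).
by apply/implyP => h; rewrite (implyP (C2 j) h) (implyP (D2 j) h).
Qed.

Lemma Adm_pre m (F : finFieldType) (x : 'M[F]_m) C :
  (forall i, mf x (rev_ord i) = rev_ord (mf x i)) -> Adm C -> Adm (pre x C).
Proof.
move=> H /andP [/forallP C1 /forallP C2]; apply/andP; split; apply/forallP => j; rewrite !inE.
  by rewrite H; exact: C1.
by apply/implyP => /eqP h; apply: (implyP (C2 _)); rewrite -H h eqxx.
Qed.

Lemma Adm_Cset t n r : (r <= n)%N -> Adm (Cset t n r).
Proof.
move=> rn; have hN := dimN_bnd t n.
apply/andP; split; apply/forallP => j; rewrite !inE /inC /inCg.
  have hj := ltn_ord j; have rv : (rev_ord j : nat) = (dimN t n - j.+1)%N := erefl.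
  rewrite rv; apply/eqP; apply/idP/idP; lia.
apply/implyP => /eqP /(congr1 (@nat_of_ord _)).
have hj := ltn_ord j; have rv : (rev_ord j : nat) = (dimN t n - j.+1)%N := erefl.
rewrite rv; lia.
Qed.

Theorem proposition2p2 (t : cgtype) (q n : nat) (F : finFieldType)
  (hn : (0 < n)%N)
  (hF : #|F| = (if cg_is_unitary t then q ^ 2 else q)%N)
  (L M : {set 'M[F]_(dimN t n)}) (x : 'M[F]_(dimN t n)) :
  @pure_levi t q n F L -> @pure_levi t q n F M -> x \in @bn_N t q n F ->
  @pure_levi t q n F (conjm x L :&: M).
Proof.
case=> y yN [r rn ->] [z zN [s sn ->]] xN.
rewrite !std_Lv // !conj_bn // Lv_I.
set D := (pre x (pre y (Cset t n r)) :&: pre z (Cset t n s)).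
have AD : Adm D.
  apply: Adm_I; last by apply: Adm_pre; [exact: bn_pair zN|exact: Adm_Cset].
  apply: Adm_pre; first exact: bn_pair xN.
  by apply: Adm_pre; [exact: bn_pair yN|exact: Adm_Cset].
have [p [r' [r'n p1 p2 p3]]] := perm_construct (dimN_bnd t n) AD.
have [w [wN wf]] := perm_in_bn hF p1 p2.
exists w => //; exists r' => //.
rewrite std_Lv // conj_bn //; congr Lv; apply/setP => j.
have := p3 j; rewrite /D inE => <-; by rewrite [RHS]inE wf inE.
Qed.
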